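(* Let $\sigma$ be a strongly erasing $k$-block substitution with $w_\epsilon\ne1^k$ that satisfies the optimality condition. Let $(w^{(n)})_{n\in\mathbb N_0}$ be any sequence of finite binary words. Then there exist $x\in[w^{(0)}]$ and positive integers $h_1,h_2,\dots$ such that $f_\sigma^{h_n}(x)\in[w^{(n)}]$ for every $n\in\mathbb N$.
   Context: Notation: $\mathbb I=[0,1]$. $\{0,1\}^*$ and $\{0,1\}^\omega$ denote finite and infinite binary words, and $\epsilon$ is the empty word. For a word $w$, set $0.w=\sum_iw_i2^{-i}$. For $x\in(0,1]$, $\widetilde x$ is the unique infinite binary expansion of $x$ not ending in $0^\infty$. For $w\in\{0,1\}^*$, the cylinder is $[w]=\{x\in\mathbb I: x=0.wv\text{ for some finite or infinite word } v\}$. Fix $k\ge2$. An erasing $k$-block substitution is a map $\sigma:\{0,1\}^k\to\{0,1\}^*$ with exactly one block $w_\epsilon$ such that $\sigma(w_\epsilon)=\epsilon$. It acts blockwise on infinite words and on finite words of length a multiple of $k$. $k$-rounding: a $k$-rounding of $w$ is any word $wv$ whose length is the least multiple of $k$ that is $\ge|w|$; if $|w|$ is a multiple of $k$, the only $k$-rounding of $w$ is $w$. $\sigma$ is strongly erasing if for every $w\in\{0,1\}^*$ there exist $n\in\mathbb N$ and words $r_0,\dots,r_{n-1}$ such that $r_0$ is a $k$-rounding of $w$, $r_j$ is a $k$-rounding of $\sigma(r_{j-1})$ for $1\le j\le n-1$, and $\sigma(r_{n-1})=\epsilon$. The map $f_\sigma:\mathbb I\to\mathbb I$ is defined by $f_\sigma(x)=0.\sigma(\widetilde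 x)$ if $x\in(0,1]$ and $\widetilde x\neq w_\epsilon^\infty$, and $f_\sigma(x)=0$ otherwise. Optimality condition: every $w\in\{0,1\}^\omega$ can be written as $w=\prod_{i\ge1}\sigma(b_i)$ with blocks $b_i\in\{0,1\}^k$ satisfying $\sigma(b_i)\ne\epsilon$. *)

(* Defs.v *)
From Stdlib Require Import Reals Lra Lia Arith List ClassicalEpsilon.
From Coquelicot Require Import Coquelicot.
Import ListNotations.
Open Scope R_scope.

(* Finite binary words: list bool.  Infinite binary words: nat -> bool,
   indexed from 0 (so w 0 is the first letter w_1 of the paper). *)
Definition fword := list bool.
Definition iword := nat -> bool.

Definition bit (b : bool) : R := if b then 1 else 0.

Fixpoint fin_value (w : fword) : R :=
  match w with
  | [] => 0
  | b :: l => bit b / 2 + fin_value l / 2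
  end.

Definition inf_value (w : iword) : R :=
  Series (fun i => bit (w i) / 2 ^ (S i)).

Definition prepend (w : fword) (v : iword) : iword :=
  fun i => if (i <? length w)%nat then nth i w false else v (i - length w)%nat.

Definition in_cyl (w : fword) (x : R) : Prop :=
  0 <= x <= 1 /\
  ((exists v : fword, x = fin_value (w ++ v)) \/
   (exists v : iword, x = inf_value (prepend w v))).

Definition ends_in_zeros (e : iword) : Prop :=
  exists N, forall i, (N <= i)%nat -> e i = false.

(* x~ : the unique infinite binary expansion of x in (0,1] not ending in 0^oo
   (chosen by Hilbert's epsilon; the property determines it uniquely). *)
Definition tilde (x : R) : iword :=
  epsilon (inhabits (fun _ => false))
    (fun e : iword => inf_value e = x /\ ~ ends_in_zeros e).

(* Blockwise action of sigma on a finite word (length multiple of k). *)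
Fixpoint apply_fin_aux (k : nat) (sigma : fword -> fword) (fuel : nat)
    (w : fword) : fword :=
  match fuel with
  | O => []
  | S f => match w with
           | [] => []
           | _ => sigma (firstn k w) ++ apply_fin_aux k sigma f (skipn k w)
           end
  end.

Definition apply_fin (k : nat) (sigma : fword -> fword) (w : fword) : fword :=
  apply_fin_aux k sigma (length w) w.

(* the j-th k-block b_{j+1} of an infinite word *)
Definition block (k : nat) (w : iword) (j : nat) : fword :=
  map (fun i => w (j * k + i)%nat) (seq 0 k).

Fixpoint prefix_len (ws : nat -> fword) (j : nat) : nat :=
  match j with
  | O => O
  | S j' => (prefix_len ws j' + length (ws j'))%nat
  end.

Definition concat_value (ws : nat -> fword) : R :=
  Series (fun j => fin_value (ws j) / 2 ^ (prefix_len ws j)).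

Definition erasing_subst (k : nat) (sigma : fword -> fword) (weps : fword) : Prop :=
  length weps = k /\
  (forall b : fword, length b = k -> (sigma b = [] <-> b = weps)).

Definition is_krounding (k : nat) (w r : fword) : Prop :=
  (exists v, r = w ++ v) /\
  Nat.modulo (length r) k = 0%nat /\ (length w <= length r)%nat /\
  (forall m : nat, Nat.modulo m k = 0%nat -> (length w <= m)%nat ->
                   (length r <= m)%nat).

Definition strongly_erasing (k : nat) (sigma : fword -> fword) : Prop :=
  forall w : fword, exists (n : nat) (r : nat -> fword),
    (0 < n)%nat /\
    is_krounding k w (r 0%nat) /\
    (forall j, (1 <= j <= n - 1)%nat ->
       is_krounding k (apply_fin k sigma (r (j - 1)%nat)) (r j)) /\
    apply_fin k sigma (r (n - 1)%nat) = [].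

Definition optimal (k : nat) (sigma : fword -> fword) : Prop :=
  forall w : iword, exists b : nat -> fword,
    (forall i, length (b i) = k /\ sigma (b i) <> []) /\
    (forall j q, (q < length (sigma (b j)))%nat ->
       w (prefix_len (fun i => sigma (b i)) j + q)%nat = nth q (sigma (b j)) false).

Definition f_sigma (k : nat) (sigma : fword -> fword) (weps : fword) (x : R) : R :=
  if Rlt_dec 0 x then
    if Rle_dec x 1 then
      match excluded_middle_informative
              (forall i, tilde x i = nth (Nat.modulo i k) weps false) with
      | left _ => 0
      | right _ => concat_value (fun j => sigma (block k (tilde x) j))
      end
    else 0
  else 0.

(* Main.v *)
Require Import Defs.
From Stdlib Require Import Reals Lra Lia Arith List ClassicalEpsilon Classical FunctionalExtensionality.
From Coquelicot Require Import Coquelicot.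
Import ListNotations.
Open Scope R_scope.

Fixpoint psum (f : nat -> R) (n : nat) : R :=
  match n with O => 0 | S n => psum f n + f n end.

Lemma psum_sum_n : forall f n, psum f (S n) = sum_n f n.
Proof.
  intros f n; induction n.
  - rewrite sum_O. simpl. ring.
  - rewrite sum_Sn. change (psum f (S (S n))) with (psum f (S n) + f (S n)).
    rewrite IHn. reflexivity.
Qed.

Lemma lim_series : forall f (l : R), is_lim_seq (psum f) l -> is_series f l.
Proof.
  intros f l H. apply is_lim_seq_incr_1 in H.
  apply (is_lim_seq_ext _ (sum_n f)) in H.
  - exact H.
  - intros n; apply psum_sum_n.
Qed.

Definition term (e : iword) (i : nat) : R := bit (e i) / 2 ^ (S i).
Definition shift (n : nat) (e : iword) : iword := fun i => e (n + i)%nat.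
Definition val (e : iword) : R := inf_value e.

Lemma bit_bounds : forall b, 0 <= bit b <= 1.
Proof. intros []; simpl; lra. Qed.

Lemma pow2_pos : forall n, 0 < 2 ^ n.
Proof. intros; apply pow_lt; lra. Qed.

Lemma term_bounds : forall e i, 0 <= term e i <= / 2 ^ (S i).
Proof.
  intros e i. unfold term. pose proof (pow2_pos (S i)). pose proof (bit_bounds (e i)).
  unfold Rdiv. split.
  - apply Rmult_le_pos; [lra|]. left; apply Rinv_0_lt_compat; lra.
  - rewrite <- (Rmult_1_l (/ 2 ^ S i)) at 2. apply Rmult_le_compat_r; [left; apply Rinv_0_lt_compat; lra|lra].
Qed.

Lemma psum_bounds : forall e n, 0 <= psum (term e) n <= 1 - / 2 ^ n.
Proof.
  intros e n; induction n; simpl.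
  - rewrite Rinv_1. lra.
  - pose proof (term_bounds e n). pose proof (pow2_pos n).
    assert (/ (2 * 2 ^ n) = / 2 ^ n / 2) by (field; lra).
    simpl in H. rewrite H1 in H. rewrite H1. lra.
Qed.

Lemma psum_mono : forall e n, psum (term e) n <= psum (term e) (S n).
Proof. intros; simpl. pose proof (term_bounds e n); lra. Qed.

Lemma val_lim : forall e, is_lim_seq (psum (term e)) (val e).
Proof.
  intros e.
  assert (Hex : ex_finite_lim_seq (psum (term e))).
  { apply (ex_finite_lim_seq_incr _ 1).
    - apply psum_mono.
    - intros n; pose proof (psum_bounds e n); pose proof (pow2_pos n).
      pose proof (Rinv_0_lt_compat _ H0). lra. }
  destruct Hex as [l Hl].
  assert (Hs := lim_series _ _ Hl).
  apply is_series_unique in Hs. unfold val, inf_value.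
  unfold term in Hs. rewrite Hs. exact Hl.
Qed.

Lemma psum_ext : forall f g n, (forall i, (i < n)%nat -> f i = g i) -> psum f n = psum g n.
Proof.
  intros f g n; induction n; intros H; simpl; auto.
  rewrite IHn, H; auto.
Qed.

Lemma psum_split : forall e n m,
  psum (term e) (n + m) = psum (term e) n + psum (term (shift n e)) m / 2 ^ n.
Proof.
  intros e n m; induction m.
  - rewrite Nat.add_0_r; simpl; pose proof (pow2_pos n); field; lra.
  - rewrite Nat.add_succ_r. simpl. rewrite IHm. unfold term, shift.
    pose proof (pow2_pos n). pose proof (pow2_pos m).
    replace (2 ^ S (n + m)) with (2 ^ n * 2 ^ S m) by (rewrite <- pow_add; f_equal; lia).
    simpl. field. lra.
Qed.

Lemma Rbar_finite_eq : forall a b : R, Finite a = Finite b -> a = b.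
Proof. intros a b H; injection H; auto. Qed.

Lemma val_split : forall e n, val e = psum (term e) n + val (shift n e) / 2 ^ n.
Proof.
  intros e n.
  assert (H1 := val_lim e).
  apply (is_lim_seq_incr_n _ n) in H1.
  assert (H2 : is_lim_seq (fun m => psum (term e) (m + n)) (psum (term e) n + val (shift n e) / 2 ^ n)).
  { apply (is_lim_seq_ext (fun m => psum (term e) n + psum (term (shift n e)) m * / 2 ^ n)).
    - intros m. rewrite Nat.add_comm, psum_split. reflexivity.
    - apply is_lim_seq_plus'. apply is_lim_seq_const.
      apply (is_lim_seq_scal_r _ (/ 2 ^ n) (val (shift n e))). apply val_lim. }
  apply is_lim_seq_unique in H1. apply is_lim_seq_unique in H2.
  rewrite H1 in H2. apply Rbar_finite_eq in H2. exact H2.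
Qed.

Lemma val_bounds : forall e, 0 <= val e <= 1.
Proof.
  intros e. split.
  - assert (H := is_lim_seq_le (fun _ => 0) (psum (term e)) 0 (val e)).
    simpl in H. apply H. intros; apply psum_bounds. apply is_lim_seq_const. apply val_lim.
  - assert (H := is_lim_seq_le (psum (term e)) (fun _ => 1) (val e) 1).
    simpl in H. apply H. intros n; pose proof (psum_bounds e n); pose proof (pow2_pos n).
    pose proof (Rinv_0_lt_compat _ H1). lra. apply val_lim. apply is_lim_seq_const.
Qed.

Definition ones (e : iword) : Prop := forall L, exists i, (L <= i)%nat /\ e i = true.

Lemma ones_shift : forall e n, ones e -> ones (shift n e).
Proof.
  intros e n H L. destruct (H (n + L)%nat) as [i [Hi Hei]].
  exists (i - n)%nat. split; [lia|]. unfold shift. replace (n + (i - n))%nat with i by lia. auto.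
Qed.

Lemma val_pos : forall e i, e i = true -> 0 < val e.
Proof.
  intros e i H. rewrite (val_split e (S i)). simpl.
  pose proof (psum_bounds e i). pose proof (val_bounds (shift (S i) e)).
  pose proof (pow2_pos i).
  assert (term e i > 0). { unfold term. rewrite H. simpl. apply Rdiv_lt_0_compat; lra. }
  assert (0 <= val (shift (S i) e) / (2 * 2 ^ i)). { apply Rcomplements.Rdiv_le_0_compat; lra. }
  lra.
Qed.

Lemma uniq_aux : forall e e' i, (forall j, (j < i)%nat -> e j = e' j) ->
  e i = false -> e' i = true -> ones e' -> val e < val e'.
Proof.
  intros e e' i Hpre H0 H1 Ho.
  rewrite (val_split e (S i)), (val_split e' (S i)). simpl.
  rewrite (psum_ext (term e) (term e') i) by (intros; unfold term; rewrite Hpre; auto).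
  assert (T0 : term e i = 0) by (unfold term; rewrite H0; simpl; lra).
  assert (T1 : term e' i = 1 / (2 * 2 ^ i)) by (unfold term; rewrite H1; simpl; lra).
  rewrite T0, T1.
  pose proof (val_bounds (shift (S i) e)).
  destruct (ones_shift e' (S i) Ho 0%nat) as [j [_ Hj]].
  pose proof (val_pos _ _ Hj). pose proof (pow2_pos i).
  assert (val (shift (S i) e) / (2 * 2 ^ i) <= 1 / (2 * 2 ^ i)).
  { unfold Rdiv. apply Rmult_le_compat_r. left; apply Rinv_0_lt_compat; lra. lra. }
  assert (0 < val (shift (S i) e') / (2 * 2 ^ i)) by (apply Rdiv_lt_0_compat; lra).
  lra.
Qed.

Lemma val_inj : forall e e', ones e -> ones e' -> val e = val e' -> forall i, e i = e' i.
Proof.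
  intros e e' He He' Hv i. induction i as [i IH] using lt_wf_ind.
  destruct (e i) eqn:E1, (e' i) eqn:E2; auto.
  - exfalso. assert (val e' < val e) by (apply (uniq_aux e' e i); auto; intros j Hj; symmetry; auto). lra.
  - exfalso. assert (val e < val e') by (apply (uniq_aux e e' i); auto). lra.
Qed.

Lemma not_ends_ones : forall e, ~ ends_in_zeros e -> ones e.
Proof.
  intros e H L. apply NNPP. intros Hn. apply H. exists L. intros i Hi.
  destruct (e i) eqn:E; auto. exfalso; apply Hn; exists i; auto.
Qed.

Lemma ones_not_ends : forall e, ones e -> ~ ends_in_zeros e.
Proof.
  intros e H [N HN]. destruct (H N) as [i [Hi Hei]]. rewrite HN in Hei; [discriminate|exact Hi].
Qed.

Lemma tilde_val : forall e, ones e -> tilde (val e) = e.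
Proof.
  intros e He. unfold tilde.
  match goal with |- epsilon ?i ?P = _ => assert (HP : exists x, P x) by (exists e; split; [reflexivity| apply ones_not_ends; auto]);
    pose proof (epsilon_spec i P HP) as [H1 H2] end.
  apply functional_extensionality. apply val_inj; auto. apply not_ends_ones; auto.
Qed.

Definition concat_rel (ws : nat -> fword) (E : iword) : Prop :=
  forall j q, (q < length (ws j))%nat -> E (prefix_len ws j + q)%nat = nth q (ws j) false.

Lemma pl_mono : forall ws j j', (j <= j')%nat -> (prefix_len ws j <= prefix_len ws j')%nat.
Proof.
  intros ws j j' H; induction H; simpl; lia.
Qed.

Lemma fin_value_psum : forall w a E, (forall q, (q < length w)%nat -> E (a + q)%nat = nth q w false) ->
  fin_value w / 2 ^ a = psum (term E) (a + length w) - psum (term E) a.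
Proof.
  induction w as [|b l IH]; intros a E H.
  - simpl. rewrite Nat.add_0_r. unfold Rdiv; ring.
  - simpl fin_value. simpl length.
    rewrite Nat.add_succ_r.
    assert (HI := IH (S a) E). simpl Nat.add in HI.
    replace (psum (term E) (S (a + length l))) with (fin_value l / 2 ^ S a + psum (term E) (S a)).
    2:{ rewrite HI. ring. intros q Hq. pose proof (H (S q) ltac:(simpl; lia)) as Hq'.
        replace (a + S q)%nat with (S (a + q)) in Hq' by lia. exact Hq'. }
    + simpl psum. unfold term. pose proof (H 0%nat ltac:(simpl; lia)) as H0.
      rewrite Nat.add_0_r in H0. simpl in H0. rewrite H0.
      pose proof (pow2_pos a). simpl. field. lra.
Qed.

Lemma concat_psum : forall ws E, concat_rel ws E -> forall J,
  psum (fun j => fin_value (ws j) / 2 ^ prefix_len ws j) J = psum (term E) (prefix_len ws J).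
Proof.
  intros ws E H J; induction J.
  - reflexivity.
  - simpl psum at 1. rewrite IHJ. simpl prefix_len.
    rewrite (fin_value_psum (ws J) (prefix_len ws J) E). ring.
    intros q Hq. apply H; auto.
Qed.

Lemma concat_value_eq : forall ws E, concat_rel ws E ->
  (forall L, exists J, (L <= prefix_len ws J)%nat) -> concat_value ws = val E.
Proof.
  intros ws E H Hun. unfold concat_value.
  apply is_series_unique. apply lim_series.
  apply (is_lim_seq_ext (fun J => psum (term E) (prefix_len ws J))).
  { intros J; symmetry; apply concat_psum; auto. }
  apply (is_lim_seq_subseq (psum (term E)) (val E) (prefix_len ws)).
  - intros P [N HN]. destruct (Hun N) as [J0 HJ0]. exists J0. intros n Hn.
    apply HN. pose proof (pl_mono ws J0 n Hn). lia.
  - apply val_lim.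
Qed.

Section Words.
Variable k : nat.
Variable sigma : fword -> fword.
Hypothesis hk : (2 <= k)%nat.

Definition lblock (Q : fword) (b : nat) : fword := firstn k (skipn (b * k) Q).

Fixpoint flatb (ws : nat -> fword) (c : nat) : fword :=
  match c with O => [] | S c => flatb ws c ++ ws c end.

Definition trunc (Q : fword) : fword := firstn (k * (length Q / k)) Q.
Definition T (Q : fword) : fword := apply_fin k sigma (trunc Q).
Definition pre (A : fword) (e : iword) : Prop := forall i, (i < length A)%nat -> nth i A false = e i.
Definition lpre (A B : fword) : Prop := exists C, B = A ++ C.
Definition pfx (N : nat) (y : iword) : fword := map y (seq 0 N).

Lemma nth_map_seq0 : forall (f : nat -> bool) n m d, (n < m)%nat -> nth n (map f (seq 0 m)) d = f n.
Proof.
  intros f n m d H. rewrite (nth_indep _ d (f 0%nat)) by (rewrite length_map, length_seq; lia).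
  rewrite map_nth, seq_nth by lia. reflexivity.
Qed.

Lemma aux_fuel : forall f f' Q, (length Q <= f)%nat -> (length Q <= f')%nat ->
  apply_fin_aux k sigma f Q = apply_fin_aux k sigma f' Q.
Proof.
  pose proof hk as Hk0.
  induction f as [|f IH]; intros f' Q H H'.
  - destruct Q; simpl in H; [|lia]. destruct f'; reflexivity.
  - destruct Q as [|a Q'].
    + destruct f'; reflexivity.
    + destruct f' as [|f'']; simpl in H'; [lia|].
      simpl. f_equal. apply IH.
      * rewrite length_skipn. cbn [length] in *. lia.
      * rewrite length_skipn. cbn [length] in *. lia.
Qed.

Lemma apply_fin_nil : apply_fin k sigma [] = [].
Proof. pose proof hk as Hk0. reflexivity. Qed.

Lemma apply_fin_cons : forall Q, Q <> [] ->
  apply_fin k sigma Q = sigma (firstn k Q) ++ apply_fin k sigma (skipn k Q).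
Proof.
  pose proof hk as Hk0.
  intros Q HQ. destruct Q as [|a Q']; [congruence|].
  unfold apply_fin. simpl length. simpl apply_fin_aux. f_equal.
  apply aux_fuel; rewrite length_skipn; cbn [length]; lia.
Qed.

Lemma apply_fin_app : forall c A B, length A = (c * k)%nat ->
  apply_fin k sigma (A ++ B) = apply_fin k sigma A ++ apply_fin k sigma B.
Proof.
  pose proof hk as Hk0.
  induction c as [|c IH]; intros A B HA.
  - destruct A; simpl in HA; [reflexivity|lia].
  - assert (HA0 : A <> []) by (intro; subst; simpl in HA; lia).
    rewrite (apply_fin_cons A HA0).
    rewrite apply_fin_cons by (destruct A; simpl; congruence).
    rewrite firstn_app, skipn_app.
    replace (k - length A)%nat with 0%nat by lia. simpl. rewrite app_nil_r.
    rewrite <- app_assoc. f_equal. apply IH. rewrite length_skipn. lia.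
Qed.

Lemma pl_ext : forall ws ws' j, (forall b, (b < j)%nat -> ws b = ws' b) -> prefix_len ws j = prefix_len ws' j.
Proof.
  pose proof hk as Hk0.
  intros ws ws' j; induction j; intros H; simpl; auto. rewrite IHj, H; auto.
Qed.

Lemma flatb_ext : forall ws ws' c, (forall b, (b < c)%nat -> ws b = ws' b) -> flatb ws c = flatb ws' c.
Proof.
  pose proof hk as Hk0.
  intros ws ws' c; induction c; intros H; simpl; auto. rewrite IHc, H; auto.
Qed.

Lemma flatb_length : forall ws c, length (flatb ws c) = prefix_len ws c.
Proof. pose proof hk as Hk0. intros ws c; induction c; simpl; auto. rewrite length_app, IHc; auto. Qed.

Lemma flatb_nth : forall ws c b q, (b < c)%nat -> (q < length (ws b))%nat ->
  nth (prefix_len ws b + q) (flatb ws c) false = nth q (ws b) false.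
Proof.
  pose proof hk as Hk0.
  intros ws c; induction c; intros b q Hb Hq; [lia|].
  simpl. destruct (Nat.eq_dec b c).
  - subst. rewrite app_nth2; rewrite flatb_length; [|lia]. f_equal; lia.
  - rewrite app_nth1. apply IHc; lia. rewrite flatb_length.
    pose proof (pl_mono ws (S b) c ltac:(lia)). simpl in H. lia.
Qed.

Lemma lblock_firstn : forall Q c b, (b < c)%nat -> lblock (firstn (c * k) Q) b = lblock Q b.
Proof.
  pose proof hk as Hk0.
  intros Q c b Hb. unfold lblock. rewrite skipn_firstn_comm, firstn_firstn.
  f_equal. assert (b * k + k <= c * k)%nat by nia. lia.
Qed.

Lemma apply_fin_flat : forall c Q, length Q = (c * k)%nat ->
  apply_fin k sigma Q = flatb (fun b => sigma (lblock Q b)) c.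
Proof.
  pose proof hk as Hk0.
  induction c as [|c IH]; intros Q HQ.
  - destruct Q; simpl in HQ; [reflexivity|lia].
  - rewrite <- (firstn_skipn (c * k) Q) at 1.
    rewrite (apply_fin_app c).
    2:{ rewrite length_firstn. lia. }
    rewrite IH by (rewrite length_firstn; lia).
    simpl. f_equal.
    + apply flatb_ext. intros b Hb. rewrite lblock_firstn; auto.
    + assert (Hs : length (skipn (c * k) Q) = k) by (rewrite length_skipn; lia).
      rewrite apply_fin_cons by (intro Hn; rewrite Hn in Hs; simpl in Hs; lia).
      assert (Hsk : skipn k (skipn (c * k) Q) = []) by (apply skipn_all2; lia). rewrite Hsk. rewrite apply_fin_nil, app_nil_r.
      unfold lblock. reflexivity.
Qed.

Lemma locate : forall ws c p, (p < prefix_len ws c)%nat ->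
  exists b q, (b < c)%nat /\ (q < length (ws b))%nat /\ p = (prefix_len ws b + q)%nat.
Proof.
  pose proof hk as Hk0.
  intros ws c; induction c; intros p Hp; simpl in Hp; [lia|].
  destruct (Nat.lt_ge_cases p (prefix_len ws c)).
  - destruct (IHc p H) as [b [q [H1 [H2 H3]]]]. exists b, q. split; [lia|auto].
  - exists c, (p - prefix_len ws c)%nat. repeat split; lia.
Qed.

Lemma pre_nth_block : forall A e b, pre A e -> ((b + 1) * k <= length A)%nat -> lblock A b = block k e b.
Proof.
  pose proof hk as Hk0.
  intros A e b HA Hb. unfold lblock, block.
  apply nth_ext with (d := false) (d' := false).
  - rewrite length_map, length_seq, length_firstn, length_skipn. lia.
  - intros n Hn. rewrite length_firstn, length_skipn in Hn.
    rewrite nth_firstn. destruct (n <? k) eqn:E; [|apply Nat.ltb_ge in E; lia].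
    rewrite nth_skipn. rewrite HA by lia.
    rewrite nth_map_seq0 by lia. reflexivity.
Qed.

Lemma trunc_length : forall A, length (trunc A) = ((length A / k) * k)%nat.
Proof.
  pose proof hk as Hk0.
  intros A. unfold trunc. rewrite length_firstn.
  pose proof (Nat.mul_div_le (length A) k ltac:(lia)). lia.
Qed.

Lemma pre_firstn : forall A e n, pre A e -> pre (firstn n A) e.
Proof.
  pose proof hk as Hk0.
  intros A e n H i Hi. rewrite length_firstn in Hi. rewrite nth_firstn.
  destruct (i <? n) eqn:E; [|apply Nat.ltb_ge in E; lia]. apply H; lia.
Qed.

Lemma T_flat : forall A e, pre A e ->
  T A = flatb (fun b => sigma (block k e b)) (length A / k).
Proof.
  pose proof hk as Hk0.
  intros A e HA. unfold T. rewrite (apply_fin_flat (length A / k)) by apply trunc_length.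
  apply flatb_ext. intros b Hb. f_equal. apply pre_nth_block.
  unfold trunc; apply pre_firstn; auto. rewrite trunc_length. nia.
Qed.

Lemma T_nth : forall A e b q, pre A e -> (b < length A / k)%nat ->
  (q < length (sigma (block k e b)))%nat ->
  (prefix_len (fun b => sigma (block k e b)) b + q < length (T A))%nat /\
  nth (prefix_len (fun b => sigma (block k e b)) b + q) (T A) false = nth q (sigma (block k e b)) false.
Proof.
  pose proof hk as Hk0.
  intros A e b q HA Hb Hq. rewrite (T_flat A e HA). split.
  - rewrite flatb_length. pose proof (pl_mono (fun b => sigma (block k e b)) (S b) (length A / k) ltac:(lia)).
    simpl in H. lia.
  - apply flatb_nth; auto.
Qed.

Lemma T_length : forall A e, pre A e -> length (T A) = prefix_len (fun b => sigma (block k e b)) (length A / k).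
Proof. pose proof hk as Hk0. intros A e HA. rewrite (T_flat A e HA), flatb_length. reflexivity. Qed.

Lemma step_pre : forall A e e', pre A e -> concat_rel (fun b => sigma (block k e b)) e' -> pre (T A) e'.
Proof.
  pose proof hk as Hk0.
  intros A e e' HA Hc i Hi. rewrite (T_length A e HA) in Hi.
  destruct (locate _ _ _ Hi) as [b [q [H1 [H2 H3]]]]. subst i.
  rewrite (proj2 (T_nth A e b q HA H1 H2)). symmetry. apply Hc; auto.
Qed.

Lemma lpre_nth : forall A B i, lpre A B -> (i < length A)%nat -> nth i A false = nth i B false.
Proof. pose proof hk as Hk0. intros A B i [C HC] Hi. subst. rewrite app_nth1; auto. Qed.

Lemma lpre_len : forall A B, lpre A B -> (length A <= length B)%nat.
Proof. pose proof hk as Hk0. intros A B [C HC]; subst; rewrite length_app; lia. Qed.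

Lemma lpre_refl : forall A, lpre A A.
Proof. pose proof hk as Hk0. intros; exists []; rewrite app_nil_r; auto. Qed.

Lemma lpre_trans : forall A B C, lpre A B -> lpre B C -> lpre A C.
Proof. pose proof hk as Hk0. intros A B C [D HD] [E HE]. exists (D ++ E). subst. rewrite app_assoc; auto. Qed.

Lemma pre_lpre : forall A B e, lpre A B -> pre B e -> pre A e.
Proof.
  pose proof hk as Hk0.
  intros A B e H HB i Hi. rewrite (lpre_nth A B i H Hi). apply HB. pose proof (lpre_len _ _ H); lia.
Qed.

Lemma pre_both : forall A B e, pre A e -> pre B e -> (length A <= length B)%nat -> lpre A B.
Proof.
  pose proof hk as Hk0.
  intros A B e HA HB Hl. exists (skipn (length A) B).
  rewrite <- (firstn_skipn (length A) B) at 1. f_equal.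
  apply nth_ext with (d := false) (d' := false).
  - rewrite length_firstn; lia.
  - intros n Hn. rewrite length_firstn in Hn. rewrite nth_firstn.
    destruct (n <? length A) eqn:E; [|apply Nat.ltb_ge in E; lia].
    rewrite HA, HB by lia. reflexivity.
Qed.

Lemma pfx_pre : forall N y, pre (pfx N y) y.
Proof.
  pose proof hk as Hk0.
  intros N y i Hi. unfold pfx in *. rewrite length_map, length_seq in Hi.
  rewrite nth_map_seq0 by lia. reflexivity.
Qed.

Lemma pfx_length : forall N y, length (pfx N y) = N.
Proof. pose proof hk as Hk0. intros; unfold pfx; rewrite length_map, length_seq; auto. Qed.

Lemma trunc_mono : forall A B, lpre A B -> lpre (trunc A) (trunc B).
Proof.
  pose proof hk as Hk0.
  intros A B [C HC]. subst B. unfold trunc.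
  set (a := (k * (length A / k))%nat). set (a' := (k * (length (A ++ C) / k))%nat).
  assert (Ha : (a <= length A)%nat) by (apply Nat.mul_div_le; lia).
  assert (Haa : (a <= a')%nat).
  { unfold a, a'. apply Nat.mul_le_mono_l. apply Nat.div_le_mono; [lia|]. rewrite length_app; lia. }
  exists (skipn a (firstn a' (A ++ C))).
  rewrite <- (firstn_skipn a (firstn a' (A ++ C))) at 1. f_equal.
  rewrite firstn_firstn. replace (Nat.min a a') with a by lia.
  rewrite firstn_app. replace (a - length A)%nat with 0%nat by lia. simpl. rewrite app_nil_r. auto.
Qed.

Lemma T_mono : forall A B, lpre A B -> lpre (T A) (T B).
Proof.
  pose proof hk as Hk0.
  intros A B H. destruct (trunc_mono A B H) as [D HD]. unfold T. rewrite HD.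
  rewrite (apply_fin_app (length A / k)) by (rewrite trunc_length; auto).
  exists (apply_fin k sigma D). reflexivity.
Qed.

Definition Tj (j : nat) (A : fword) : fword := Nat.iter j T A.

Lemma Tj_mono : forall j A B, lpre A B -> lpre (Tj j A) (Tj j B).
Proof. pose proof hk as Hk0. induction j; intros A B H; simpl; auto. apply T_mono, IHj; auto. Qed.

Definition NE (e : iword) : Prop := forall L, exists b, (L <= b)%nat /\ sigma (block k e b) <> [].
Definition Step (e e' : iword) : Prop := NE e /\ concat_rel (fun b => sigma (block k e b)) e'.

Lemma NE_grow : forall e, NE e -> forall L, exists c, (L <= prefix_len (fun b => sigma (block k e b)) c)%nat.
Proof.
  pose proof hk as Hk0.
  intros e H L; induction L.
  - exists 0%nat; lia.
  - destruct IHL as [c Hc]. destruct (H c) as [b [Hb Hne]].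
    exists (S b). simpl. pose proof (pl_mono (fun b => sigma (block k e b)) c b Hb).
    destruct (sigma (block k e b)); [congruence|]. simpl. lia.
Qed.

Lemma T_grow : forall e, NE e -> forall L, exists M, forall A, pre A e -> (M <= length A)%nat -> (L <= length (T A))%nat.
Proof.
  pose proof hk as Hk0.
  intros e H L. destruct (NE_grow e H L) as [c Hc]. exists (c * k)%nat. intros A HA HM.
  rewrite (T_length A e HA).
  assert (c <= length A / k)%nat.
  { apply Nat.div_le_lower_bound; lia. }
  pose proof (pl_mono (fun b => sigma (block k e b)) c (length A / k) H0). lia.
Qed.

Definition Chain (m : nat) (y z : iword) : Prop :=
  exists Y : nat -> iword, Y 0%nat = y /\ Y m = z /\
    forall j, (j < m)%nat -> Step (Y j) (Y (S j)) /\ ones (Y j).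

Lemma chain_props : forall m (Y : nat -> iword),
  (forall j, (j < m)%nat -> Step (Y j) (Y (S j)) /\ ones (Y j)) ->
  forall j, (j <= m)%nat ->
    (forall A, pre A (Y 0%nat) -> pre (Tj j A) (Y j)) /\
    (forall L, exists N0, forall A, pre A (Y 0%nat) -> (N0 <= length A)%nat -> (L <= length (Tj j A))%nat).
Proof.
  pose proof hk as Hk0.
  intros m Y HY j; induction j; intros Hj.
  - split; auto. intros L; exists L; simpl; auto.
  - destruct IHj as [IH1 IH2]; [lia|]. destruct (HY j ltac:(lia)) as [[HNE Hc] _].
    split.
    + intros A HA. simpl. apply (step_pre _ (Y j)); auto.
    + intros L. destruct (T_grow (Y j) HNE L) as [M HM]. destruct (IH2 M) as [N0 HN0].
      exists N0. intros A HA HA'. simpl. apply HM; auto.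
Qed.


Definition Special (e : iword) : Prop :=
  forall N p, (0 < p)%nat -> exists i, (N <= i)%nat /\ e (i + p)%nat <> e i.

Lemma special_ones : forall e, Special e -> ones e.
Proof.
  intros e H L. destruct (H L 1%nat ltac:(lia)) as [i [Hi Hne]].
  destruct (e i) eqn:E1.
  - exists i; auto.
  - exists (i + 1)%nat. split; [lia|]. destruct (e (i + 1)%nat); congruence.
Qed.

Lemma prepend_lt : forall w v i, (i < length w)%nat -> prepend w v i = nth i w false.
Proof. intros. unfold prepend. apply Nat.ltb_lt in H. rewrite H. auto. Qed.

Lemma prepend_ge : forall w v i, (length w <= i)%nat -> prepend w v i = v (i - length w)%nat.
Proof. intros. unfold prepend. apply Nat.ltb_ge in H. rewrite H. auto. Qed.

Lemma special_prepend : forall w s, Special s -> Special (prepend w s).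
Proof.
  intros w s H N p Hp. destruct (H N p Hp) as [i [Hi Hne]].
  exists (i + length w)%nat. split; [lia|].
  rewrite !prepend_ge by lia. replace (i + length w + p - length w)%nat with (i + p)%nat by lia.
  replace (i + length w - length w)%nat with i by lia. auto.
Qed.

Lemma special_shift : forall n e, Special e -> Special (shift n e).
Proof.
  intros n e H N p Hp. destruct (H (n + N)%nat p Hp) as [i [Hi Hne]].
  exists (i - n)%nat. split; [lia|]. unfold shift.
  replace (n + (i - n + p))%nat with (i + p)%nat by lia. replace (n + (i - n))%nat with i by lia. auto.
Qed.

Lemma pre_prepend : forall Q t, pre Q (prepend Q t).
Proof. intros Q t i Hi. rewrite prepend_lt; auto. Qed.

Lemma prepend_shift : forall A y, pre A y -> prepend A (shift (length A) y) = y.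
Proof.
  intros A y H. apply functional_extensionality. intros i.
  destruct (Nat.lt_ge_cases i (length A)).
  - rewrite prepend_lt; auto.
  - rewrite prepend_ge; auto. unfold shift. f_equal. lia.
Qed.

Lemma block_prepend : forall Q t c d, length Q = (c * k)%nat ->
  block k (prepend Q t) (c + d) = block k t d.
Proof.
  pose proof hk as Hk0.
  intros Q t c d HQ. unfold block. apply map_ext_in. intros i Hi. apply in_seq in Hi.
  rewrite prepend_ge by nia. f_equal. nia.
Qed.

Lemma special_pre : forall t s, (forall b, sigma (block k t b) <> []) ->
  concat_rel (fun b => sigma (block k t b)) s -> Special s -> Special t.
Proof.
  pose proof hk as Hk0.
  intros t s Hne Hc Hs N p Hp. apply NNPP. intros Hn.
  assert (Hper : forall i, (N <= i)%nat -> t (i + p)%nat = t i).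
  { intros i Hi. destruct (Bool.bool_dec (t (i + p)%nat) (t i)); auto. exfalso; apply Hn; exists i; auto. }
  assert (Hper2 : forall a i, (N <= i)%nat -> t (i + p * a)%nat = t i).
  { induction a; intros i Hi. rewrite Nat.mul_0_r, Nat.add_0_r; auto.
    replace (i + p * S a)%nat with ((i + p * a) + p)%nat by lia. rewrite Hper by lia. auto. }
  set (ws := fun b => sigma (block k t b)).
  assert (Hws : forall b, (N <= b)%nat -> ws (b + p)%nat = ws b).
  { intros b Hb. unfold ws. f_equal. unfold block. apply map_ext_in. intros i Hi.
    replace ((b + p) * k + i)%nat with ((b * k + i) + p * k)%nat by lia. apply Hper2. nia. }
  set (D := (prefix_len ws (N + p) - prefix_len ws N)%nat).
  assert (Hpl_ge : forall a b, (prefix_len ws a + b <= prefix_len ws (a + b))%nat).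
  { intros a b; induction b. rewrite !Nat.add_0_r; lia.
    replace (a + S b)%nat with (S (a + b)) by lia. simpl. assert (length (ws (a + b)%nat) > 0)%nat.
    { unfold ws. destruct (sigma (block k t (a + b))) eqn:E. exfalso; apply (Hne (a + b)%nat); auto. simpl; lia. }
    lia. }
  assert (HD : (0 < D)%nat). { unfold D. pose proof (Hpl_ge N p). lia. }
  assert (Hpl : forall d, prefix_len ws (N + d + p) = (prefix_len ws (N + d) + D)%nat).
  { induction d.
    - rewrite Nat.add_0_r. unfold D. pose proof (pl_mono ws N (N + p) ltac:(lia)). lia.
    - replace (N + S d + p)%nat with (S (N + d + p)) by lia. replace (N + S d)%nat with (S (N + d)) by lia.
      simpl. rewrite IHd. rewrite Hws by lia. lia. }
  destruct (Hs (prefix_len ws N) D HD) as [i [Hi Hsi]]. apply Hsi.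
  assert (Hlt : (i < prefix_len ws (S i))%nat). { pose proof (Hpl_ge 0%nat (S i)) as H. change (0 + S i)%nat with (S i) in H.
    assert (prefix_len ws 0 = 0%nat) by reflexivity. lia. }
  destruct (locate ws (S i) i Hlt) as [b [q [Hb [Hq Hiq]]]].
  assert (HbN : (N <= b)%nat).
  { destruct (Nat.lt_ge_cases b N); auto. pose proof (pl_mono ws (S b) N H). simpl in H0. lia. }
  replace b with (N + (b - N))%nat in * by lia.
  subst i. rewrite <- Nat.add_assoc, (Nat.add_comm q D), Nat.add_assoc, <- Hpl.
  assert (Hc' : forall j q, (q < length (ws j))%nat -> s (prefix_len ws j + q)%nat = nth q (ws j) false) by exact Hc.
  rewrite (Hc' (N + (b - N) + p)%nat q).
  2:{ rewrite Hws by lia. auto. }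
  rewrite (Hc' (N + (b - N))%nat q) by auto. rewrite Hws by lia. reflexivity.
Qed.

Lemma pl_shift_app : forall ws ws' c d, (forall b, ws (c + b)%nat = ws' b) ->
  prefix_len ws (c + d) = (prefix_len ws c + prefix_len ws' d)%nat.
Proof.
  intros ws ws' c d H; induction d. rewrite Nat.add_0_r; simpl; lia.
  rewrite Nat.add_succ_r. simpl. rewrite IHd, H. lia.
Qed.

Lemma concat_prepend : forall Q t s c, length Q = (c * k)%nat ->
  concat_rel (fun b => sigma (block k t b)) s ->
  concat_rel (fun b => sigma (block k (prepend Q t) b)) (prepend (apply_fin k sigma Q) s).
Proof.
  pose proof hk as Hk0.
  intros Q t s c HQ Hc b q Hq.
  set (ws' := fun b => sigma (block k (prepend Q t) b)) in *.
  set (wsQ := fun b => sigma (lblock Q b)).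
  assert (Heq : forall b, (b < c)%nat -> ws' b = wsQ b).
  { intros b0 Hb0. unfold ws', wsQ. f_equal. symmetry. apply pre_nth_block. apply pre_prepend. nia. }
  assert (HAF : apply_fin k sigma Q = flatb wsQ c) by (apply apply_fin_flat; auto).
  destruct (Nat.lt_ge_cases b c).
  - rewrite (pl_ext ws' wsQ b) by (intros; apply Heq; lia).
    change (sigma (block k (prepend Q t) b)) with (ws' b) in *.
    rewrite (Heq b H) in *. rewrite HAF. rewrite prepend_lt.
    + apply flatb_nth; auto.
    + rewrite flatb_length. pose proof (pl_mono wsQ (S b) c H). simpl in H0. lia.
  - replace b with (c + (b - c))%nat in * by lia.
    rewrite (pl_shift_app ws' (fun b => sigma (block k t b)) c (b - c)).
    2:{ intros b0. unfold ws'. rewrite block_prepend with (c := c); auto. }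
    rewrite (pl_ext ws' wsQ c) by auto.
    assert (HL : length (apply_fin k sigma Q) = prefix_len wsQ c) by (rewrite HAF, flatb_length; auto).
    rewrite prepend_ge by lia. rewrite HL.
    replace (prefix_len wsQ c + prefix_len (fun b => sigma (block k t b)) (b - c) + q - prefix_len wsQ c)%nat
      with (prefix_len (fun b => sigma (block k t b)) (b - c) + q)%nat by lia.
    unfold ws' in *. rewrite block_prepend with (c := c) in * by auto.
    apply Hc; auto.
Qed.

Hypothesis Hopt : optimal k sigma.

Lemma preimage : forall s, exists t, (forall b, sigma (block k t b) <> []) /\
  concat_rel (fun b => sigma (block k t b)) s.
Proof.
  pose proof hk as Hk0.
  intros s. destruct (Hopt s) as [bb [Hbb Hc]].
  set (t := fun i => nth (i mod k) (bb (i / k)%nat) false).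
  assert (Hbl : forall j, block k t j = bb j).
  { intros j. apply nth_ext with (d := false) (d' := false).
    - unfold block. rewrite length_map, length_seq. destruct (Hbb j); lia.
    - intros n Hn. unfold block in Hn. rewrite length_map, length_seq in Hn.
      unfold block. rewrite nth_map_seq0 by lia. unfold t.
      replace (j * k + n)%nat with (n + j * k)%nat by lia.
      rewrite Nat.div_add, Nat.mod_add by lia. rewrite Nat.div_small, Nat.mod_small by lia. reflexivity. }
  exists t. split.
  - intros b. rewrite Hbl. apply Hbb.
  - intros j q Hq. rewrite (pl_ext _ (fun i => sigma (bb i))) by (intros; rewrite Hbl; auto).
    rewrite Hbl in *. apply Hc; auto.
Qed.

Lemma lift_step : forall Q c y', length Q = (c * k)%nat -> Special y' -> pre (apply_fin k sigma Q) y' ->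
  exists y, pre Q y /\ Special y /\ ones y /\ Step y y'.
Proof.
  pose proof hk as Hk0.
  intros Q c y' HQ Hs Hp.
  destruct (preimage (shift (length (apply_fin k sigma Q)) y')) as [t [Hne Hc]].
  assert (Hst : Special t) by (eapply special_pre; eauto; apply special_shift; auto).
  exists (prepend Q t). split; [apply pre_prepend|]. split; [apply special_prepend; auto|].
  split; [apply special_ones, special_prepend; auto|].
  split.
  - intros L. exists (c + L)%nat. split; [lia|]. rewrite block_prepend with (c := c); auto.
  - rewrite <- (prepend_shift (apply_fin k sigma Q) y') by auto.
    apply concat_prepend with (c := c); auto.
Qed.

Lemma chain_cons : forall m y y' z, ones y -> Step y y' -> Chain m y' z -> Chain (S m) y z.
Proof.
  intros m y y' z Ho Hs [Y [H0 [Hm HY]]].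
  exists (fun j => match j with O => y | S j' => Y j' end). split; auto. split; auto.
  intros j Hj. destruct j.
  - rewrite H0; auto.
  - apply HY; lia.
Qed.

Lemma chain_snoc : forall m y y0 z, Chain m y y0 -> Step y0 z -> ones y0 -> Chain (S m) y z.
Proof.
  intros m y y0 z [Y [H0 [Hm HY]]] Hs Ho.
  exists (fun j => if Nat.eqb j (S m) then z else Y j).
  split. { cbv beta. simpl. auto. }
  split. { cbv beta. rewrite Nat.eqb_refl; auto. }
  intros j Hj. cbv beta. assert (E: (j =? S m) = false) by (apply Nat.eqb_neq; lia). rewrite E.
  destruct (Nat.eq_dec j m) as [->|Hne].
  - rewrite Nat.eqb_refl, Hm. auto.
  - assert (E2 : (S j =? S m) = false) by (apply Nat.eqb_neq; lia). rewrite E2. apply HY; lia.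
Qed.

Definition Cover (r : fword) (m : nat) : Prop :=
  forall z, Special z -> exists y, pre r y /\ Special y /\ Chain m y z.

Lemma cover_succ : forall r m, Cover r m -> Cover r (S m).
Proof.
  intros r m H z Hz.
  destruct (lift_step [] 0%nat z eq_refl Hz) as [y0 [_ [Hs0 [Ho0 Hst0]]]].
  { intros i Hi. simpl in Hi. lia. }
  destruct (H y0 Hs0) as [y [Hp [Hs Hc]]].
  exists y. split; auto. split; auto. eapply chain_snoc; eauto.
Qed.

Lemma cover_plus : forall r m d, Cover r m -> Cover r (m + d).
Proof.
  intros r m d H; induction d. rewrite Nat.add_0_r; auto. rewrite Nat.add_succ_r. apply cover_succ; auto.
Qed.

Lemma krounding_aligned : forall w r, is_krounding k w r -> length r = ((length r / k) * k)%nat.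
Proof.
  pose proof hk as Hk0.
  intros w r [_ [Hm _]]. pose proof (Nat.div_mod_eq (length r) k). rewrite Hm in H. lia.
Qed.

Hypothesis Hse : strongly_erasing k sigma.

Lemma cover_from_se : forall P, exists m, (1 <= m)%nat /\ Cover P m.
Proof.
  pose proof hk as Hk0.
  intros P. destruct (Hse P) as [n [r [Hn [H0 [Hj Hlast]]]]].
  assert (Hgen : forall d, (d <= n - 1)%nat -> Cover (r (n - 1 - d)%nat) (S d)).
  { induction d; intros Hd.
    - intros z Hz. rewrite Nat.sub_0_r.
      assert (Hal : length (r (n - 1)%nat) = ((length (r (n - 1)%nat) / k) * k)%nat).
      { destruct (Nat.eq_dec n 1). subst. simpl. eapply krounding_aligned; eauto.
        eapply krounding_aligned. apply Hj. lia. }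
      destruct (lift_step (r (n - 1)%nat) _ z Hal Hz) as [y [Hp [Hs [Ho Hst]]]].
      { rewrite Hlast. intros i Hi; simpl in Hi; lia. }
      exists y. split; auto. split; auto. eapply chain_cons; eauto.
      exists (fun _ => z). repeat split; auto; lia.
    - intros z Hz. destruct (IHd ltac:(lia) z Hz) as [y' [Hp' [Hs' Hc']]].
      set (j := (n - 1 - S d)%nat). replace (n - 1 - d)%nat with (S j) in Hp' by (unfold j; lia).
      assert (Hr := Hj (S j) ltac:(unfold j; lia)). simpl in Hr. rewrite Nat.sub_0_r in Hr.
      assert (Hal : length (r j) = ((length (r j) / k) * k)%nat).
      { destruct (Nat.eq_dec j 0) as [E0|E0].
        - rewrite E0. eapply krounding_aligned; eauto.
        - eapply krounding_aligned. apply (Hj j). unfold j in *; lia. }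
      destruct Hr as [[v Hv] _].
      assert (Hpa : pre (apply_fin k sigma (r j)) y').
      { apply (pre_lpre _ (r (S j))); auto. exists v; auto. }
      destruct (lift_step (r j) _ y' Hal Hs' Hpa) as [y [Hp [Hs [Ho Hst]]]].
      exists y. split; auto. split; auto. eapply chain_cons; eauto. }
  exists n. split; [lia|].
  assert (Hc := Hgen (n - 1)%nat ltac:(lia)). replace (n - 1 - (n - 1))%nat with 0%nat in Hc by lia.
  replace (S (n - 1)) with n in Hc by lia.
  intros z Hz. destruct (Hc z Hz) as [y [Hp [Hs Hch]]]. exists y. split; auto.
  destruct H0 as [[v Hv] _]. apply (pre_lpre _ (r 0%nat)); auto. exists v; auto.
Qed.

Definition zs : iword := fun i => existsb (fun a => Nat.eqb (2 ^ a) (S i)) (seq 0 (S i)).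

Lemma zs_special : Special zs.
Proof.
  intros N p Hp. set (a := (N + p)%nat).
  assert (H1 : (a < 2 ^ a)%nat) by (apply Nat.pow_gt_lin_r; lia).
  exists (2 ^ a - 1)%nat. split; [unfold a in *; lia|].
  assert (Ht : zs (2 ^ a - 1)%nat = true).
  { unfold zs. apply existsb_exists. exists a. split.
    - apply in_seq. lia.
    - apply Nat.eqb_eq. lia. }
  assert (Hf : zs (2 ^ a - 1 + p)%nat = false).
  { unfold zs. destruct (existsb _ _) eqn:E; auto. exfalso.
    apply existsb_exists in E. destruct E as [b [_ Hb]]. apply Nat.eqb_eq in Hb.
    destruct (Nat.le_gt_cases b a).
    - pose proof (Nat.pow_le_mono_r 2 b a ltac:(lia) H). lia.
    - pose proof (Nat.pow_le_mono_r 2 (S a) b ltac:(lia) H). simpl in H0. unfold a in *. lia. }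
  rewrite Ht, Hf. discriminate.
Qed.

Definition good_at (A : fword) (n : nat) : Prop :=
  (exists i, (n <= i)%nat /\ (i < length A)%nat /\ nth i A false = true) /\
  (exists b, (n <= b)%nat /\ ((b + 1) * k <= length A)%nat /\ sigma (lblock A b) <> []).

Lemma combine : forall (Q : nat -> nat -> Prop) n,
  (forall j, (j <= n)%nat -> exists N0, forall N, (N0 <= N)%nat -> Q j N) ->
  exists N0, forall N, (N0 <= N)%nat -> forall j, (j <= n)%nat -> Q j N.
Proof.
  intros Q n; induction n; intros H.
  - destruct (H 0%nat ltac:(lia)) as [N0 HN0]. exists N0. intros N HN j Hj.
    replace j with 0%nat by lia. auto.
  - destruct IHn as [N1 HN1]. { intros; apply H; lia. }
    destruct (H (S n) ltac:(lia)) as [N2 HN2]. exists (Nat.max N1 N2). intros N HN j Hj.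
    destruct (Nat.eq_dec j (S n)). subst; apply HN2; lia. apply HN1; lia.
Qed.

Definition StageSpec (n : nat) (P w P' : fword) (m : nat) : Prop :=
  lpre P P' /\ (1 <= m)%nat /\ lpre w (Tj m P') /\ forall j, (j <= n)%nat -> good_at (Tj j P') n.

Lemma stage : forall n P w, exists pm : fword * nat, StageSpec n P w (fst pm) (snd pm).
Proof.
  pose proof hk as Hk0.
  intros n P w. destruct (cover_from_se P) as [m0 [Hm0 Hc]].
  set (m := (m0 + n)%nat). assert (Hc' := cover_plus P m0 n Hc). fold m in Hc'.
  set (u := prepend w zs). assert (Hu : Special u) by (apply special_prepend, zs_special).
  destruct (Hc' u Hu) as [y [Hpy [Hsy [Y [HY0 [HYm HY]]]]]].
  assert (CP := chain_props m Y HY).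
  assert (Hconds : forall j, (j <= n)%nat -> exists N0, forall N, (N0 <= N)%nat -> good_at (Tj j (pfx N y)) n).
  { intros j Hj. destruct (HY j ltac:(unfold m; lia)) as [[HNE _] Hones].
    destruct (Hones n) as [i [Hi Hyi]]. destruct (HNE n) as [b [Hb Hbne]].
    destruct (CP j ltac:(unfold m; lia)) as [CP1 CP2].
    destruct (CP2 (Nat.max (S i) ((b + 1) * k))) as [N0 HN0].
    exists N0. intros N HN.
    assert (Hpre : pre (Tj j (pfx N y)) (Y j)) by (apply CP1; rewrite HY0; apply pfx_pre).
    assert (Hlen := HN0 (pfx N y) ltac:(rewrite HY0; apply pfx_pre) ltac:(rewrite pfx_length; lia)).
    split.
    - exists i. split; auto. split; [lia|]. rewrite Hpre by lia. auto.
    - exists b. split; auto. split; [lia|]. rewrite (pre_nth_block _ (Y j)); auto. lia. }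
  destruct (combine _ n Hconds) as [N1 HN1].
  destruct (CP m ltac:(lia)) as [CPm1 CPm2]. destruct (CPm2 (length w)) as [N2 HN2].
  set (N := Nat.max (Nat.max N1 N2) (length P)).
  exists (pfx N y, m). simpl. split; [|split; [unfold m; lia|split]].
  - apply (pre_both _ _ y); auto. apply pfx_pre. rewrite pfx_length. lia.
  - apply (pre_both _ _ u). apply pre_prepend.
    rewrite <- HYm. apply CPm1. rewrite HY0. apply pfx_pre.
    apply HN2. rewrite HY0; apply pfx_pre. rewrite pfx_length; lia.
  - intros j Hj. apply HN1; auto. lia.
Qed.

Lemma main_words : forall W : nat -> fword, exists (E : nat -> iword) (h : nat -> nat),
  pre (W 0%nat) (E 0%nat) /\ (forall j, Step (E j) (E (S j)) /\ ones (E j)) /\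
  (forall n, (1 <= n)%nat -> (1 <= h n)%nat /\ pre (W n) (E (h n))).
Proof.
  pose proof hk as Hk0.
  intros W.
  assert (F : forall n P, {pm : fword * nat | StageSpec n P (W (S n)) (fst pm) (snd pm)}).
  { intros n P. apply constructive_indefinite_description. apply stage. }
  set (PP := fix PP n := match n with O => W 0%nat | S n' => fst (proj1_sig (F n' (PP n'))) end).
  set (hh := fun n => match n with O => 1%nat | S n' => snd (proj1_sig (F n' (PP n'))) end).
  assert (HS : forall n, StageSpec n (PP n) (W (S n)) (PP (S n)) (hh (S n))).
  { intros n. exact (proj2_sig (F n (PP n))). }
  assert (Hnest : forall n n', (n <= n')%nat -> lpre (PP n) (PP n')).
  { intros n n' H; induction H. apply lpre_refl. eapply lpre_trans; eauto. apply (HS m). }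
  assert (Hcomp : forall n n' j i, (i < length (Tj j (PP n)))%nat -> (i < length (Tj j (PP n')))%nat ->
     nth i (Tj j (PP n)) false = nth i (Tj j (PP n')) false).
  { intros n n' j i H1 H2. destruct (Nat.le_ge_cases n n').
    - apply lpre_nth; auto. apply Tj_mono, Hnest; auto.
    - symmetry. apply lpre_nth; auto. apply Tj_mono, Hnest; auto. }
  set (E := fun j i => nth i (Tj j (PP (S (Nat.max j i)))) false).
  assert (Hgood : forall n j, (j <= n)%nat -> good_at (Tj j (PP (S n))) n).
  { intros n j Hj. apply (HS n); auto. }
  assert (Hlen : forall j i, (i < length (Tj j (PP (S (Nat.max j i)))))%nat).
  { intros j i. destruct (Hgood (Nat.max j i) j ltac:(lia)) as [[i0 [Hi0 [Hi1 _]]] _]. lia. }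
  assert (Epre : forall j n, pre (Tj j (PP n)) (E j)).
  { intros j n i Hi. unfold E. apply Hcomp; auto. }
  exists E, hh. split; [|split].
  - apply (Epre 0%nat 0%nat).
  - intros j. split; [split|].
    + intros L. destruct (Hgood (Nat.max j L) j ltac:(lia)) as [_ [b [Hb [Hb2 Hne]]]].
      exists b. split; [lia|]. rewrite <- (pre_nth_block _ (E j) b (Epre j _) Hb2). auto.
    + intros b q Hq. set (n := Nat.max j ((b + 1) * k)).
      destruct (Hgood n j ltac:(unfold n; lia)) as [[i0 [Hi0 [Hi1 _]]] _].
      set (A := Tj j (PP (S n))).
      assert (Hb : (b < length A / k)%nat).
      { change (Tj j (PP (S n))) with A in Hi1.
        assert (Hn1 : ((b + 1) * k <= n)%nat) by (unfold n; lia).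
        assert ((b + 1) <= length A / k)%nat by (apply Nat.div_le_lower_bound; lia). lia. }
      destruct (T_nth A (E j) b q (Epre j _) Hb Hq) as [Tl Tn].
      rewrite <- Tn. symmetry. apply (Epre (S j) (S n)). exact Tl.
    + intros L. destruct (Hgood (Nat.max j L) j ltac:(lia)) as [[i [Hi [Hi1 Hi2]]] _].
      exists i. split; [lia|]. rewrite <- (Epre j _ i Hi1). auto.
  - intros n Hn. destruct n as [|n']; [lia|].
    destruct (HS n') as [_ [Hm [Hw _]]]. split; auto.
    apply (pre_lpre _ _ _ Hw). apply Epre.
Qed.

Lemma f_step : forall weps e e', erasing_subst k sigma weps -> Step e e' -> ones e ->
  f_sigma k sigma weps (val e) = val e'.
Proof.
  pose proof hk as Hk0.
  intros weps e e' [Hlw Her] [HNE Hc] Ho.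
  destruct (Ho 0%nat) as [i0 [_ Hi0]].
  pose proof (val_pos e i0 Hi0). pose proof (val_bounds e).
  unfold f_sigma. destruct (Rlt_dec 0 (val e)); [|lra]. destruct (Rle_dec (val e) 1); [|lra].
  rewrite tilde_val by auto.
  destruct (excluded_middle_informative _) as [Hw|Hw].
  - exfalso. destruct (HNE 0%nat) as [b [_ Hb]]. apply Hb. apply Her.
    + unfold block. rewrite length_map, length_seq. auto.
    + apply nth_ext with (d := false) (d' := false).
      * unfold block. rewrite length_map, length_seq. auto.
      * intros n Hn. unfold block in Hn. rewrite length_map, length_seq in Hn.
        unfold block. rewrite nth_map_seq0 by lia. rewrite Hw.
        replace (b * k + n)%nat with (n + b * k)%nat by lia. rewrite Nat.mod_add, Nat.mod_small by lia. auto.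
  - apply concat_value_eq; auto. apply NE_grow; auto.
Qed.

End Words.

Theorem corollary2 (k : nat) (sigma : fword -> fword) (weps : fword) :
  (2 <= k)%nat ->
  erasing_subst k sigma weps ->
  strongly_erasing k sigma ->
  weps <> repeat true k ->
  optimal k sigma ->
  forall W : nat -> fword,
    exists x : R, in_cyl (W 0%nat) x /\
      exists h : nat -> nat,
        forall n : nat, (1 <= n)%nat ->
          (1 <= h n)%nat /\ in_cyl (W n) (Nat.iter (h n) (f_sigma k sigma weps) x).
Proof.
  intros hk Her Hse _ Hopt W.
  destruct (main_words k sigma hk Hopt Hse W) as [E [h [H0 [HS Hh]]]].
  assert (Hit : forall j, Nat.iter j (f_sigma k sigma weps) (val (E 0%nat)) = val (E j)).
  { induction j; simpl; auto. rewrite IHj. destruct (HS j) as [Hst Ho].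
    apply (f_step k sigma hk weps); auto. }
  assert (Hcyl : forall w e, pre w e -> in_cyl w (val e)).
  { intros w e Hp. split. apply val_bounds. right. exists (shift (length w) e).
    rewrite (prepend_shift k hk); auto. }
  exists (val (E 0%nat)). split; auto.
  exists h. intros n Hn. destruct (Hh n Hn) as [H1 H2]. split; auto.
  rewrite Hit. apply Hcyl; auto.
Qed.
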